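(* Let $\kappa$ be a cardinal, let $\mathcal{C},\mathcal{D}$ be categories that have products indexed by sets of cardinality $\kappa$, and let $F:\mathcal{C}\to\mathcal{D}$ be a functor. Assume that $|\mathcal{D}(F(c'),F(c))|\leq\kappa$ for any two objects $c',c$ of $\mathcal{C}$. Then: (1) for any two parallel morphisms $f,g:c'\to c$ in $\mathcal{C}$ we have $F(f)=F(g)$; (2) if $\mathcal{C}$ is strongly connected, then $F$ is isomorphic to a constant functor.
   Context: A category is strongly connected if for any two objects $c,c'$ the hom-set $\mathcal{C}(c,c')$ is non-empty. *)

(* Defs.v *)
Set Implicit Arguments.
Unset Strict Implicit.

Record Category := {
  Obj : Type;
  Hom : Obj -> Obj -> Type;
  idm : forall a, Hom a a;
  comp : forall a b c, Hom b c -> Hom a b -> Hom a c;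
  comp_id_l : forall a b (f : Hom a b), comp (idm b) f = f;
  comp_id_r : forall a b (f : Hom a b), comp f (idm a) = f;
  comp_assoc : forall a b c d (f : Hom c d) (g : Hom b c) (h : Hom a b),
      comp f (comp g h) = comp (comp f g) h
}.

Arguments Hom : clear implicits.
Arguments idm {C} a : rename.
Arguments comp {C a b c} _ _ : rename.

Record Functor (C D : Category) := {
  fobj : Obj C -> Obj D;
  fmap : forall a b, Hom C a b -> Hom D (fobj a) (fobj b);
  fmap_id : forall a, fmap (idm a) = idm (fobj a);
  fmap_comp : forall a b c (f : Hom C b c) (g : Hom C a b),
      fmap (comp f g) = comp (fmap f) (fmap g)
}.

Arguments fobj {C D} F _ : rename.
Arguments fmap {C D} F {a b} _ : rename.

Definition ConstFunctor (C D : Category) (d : Obj D) : Functor C D.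
Proof.
  refine {| fobj := fun _ => d; fmap := fun _ _ _ => idm d |}.
  - reflexivity.
  - intros. symmetry. apply comp_id_l.
Defined.

Definition IsIso (C : Category) (a b : Obj C) (f : Hom C a b) : Prop :=
  exists g : Hom C b a, comp g f = idm a /\ comp f g = idm b.

Definition NatIso (C D : Category) (F G : Functor C D) : Prop :=
  exists alpha : forall c : Obj C, Hom D (fobj F c) (fobj G c),
    (forall c, IsIso (alpha c)) /\
    (forall a b (f : Hom C a b), comp (alpha b) (fmap F f) = comp (fmap G f) (alpha a)).

Definition IsoToConstantFunctor (C D : Category) (F : Functor C D) : Prop :=
  exists d : Obj D, NatIso F (ConstFunctor C d).

Definition StronglyConnected (C : Category) : Prop :=
  forall c c' : Obj C, inhabited (Hom C c c').

Definition IsProduct {C : Category} {I : Type} (X : I -> Obj C)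
    (P : Obj C) (pr : forall i, Hom C P (X i)) : Prop :=
  forall (Q : Obj C) (q : forall i, Hom C Q (X i)),
    exists! u : Hom C Q P, forall i, comp (pr i) u = q i.

Arguments IsProduct {C I} X P pr.

Definition HasProductsIndexedBy (C : Category) (I : Type) : Prop :=
  forall X : I -> Obj C,
    exists (P : Obj C) (pr : forall i, Hom C P (X i)), IsProduct X P pr.

(* Cardinals are represented by types: a cardinal kappa is the cardinality
   of a type K. *)
Definition Equipotent (A B : Type) : Prop :=
  exists (f : A -> B) (g : B -> A),
    (forall a, g (f a) = a) /\ (forall b, f (g b) = b).

Definition CardLe (A K : Type) : Prop :=
  exists f : A -> K, forall x y, f x = f y -> x = y.

Definition HasKappaProducts (C : Category) (K : Type) : Prop :=
  forall I : Type, Equipotent I K -> HasProductsIndexedBy C I.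

(* Main.v *)
Require Import Defs.
From Stdlib Require Import Classical ClassicalEpsilon FunctionalExtensionality.

Lemma cantor_no_inj (K : Type) (h : (K -> bool) -> K) :
  (forall S T, h S = h T -> S = T) -> False.
Proof.
  intros Hinj.
  pose (p := fun k => if excluded_middle_informative (exists S, h S = k /\ S k = true)
                    then false else true).
  assert (Hp : forall k, p k = true <-> ~ (exists S, h S = k /\ S k = true)).
  { intro k. unfold p. destruct (excluded_middle_informative _); split; intros; try tauto; discriminate. }
  destruct (p (h p)) eqn:E.
  - apply (proj1 (Hp _) E). exists p; auto.
  - assert (~ p (h p) = true) by (rewrite E; discriminate).
    apply H. apply Hp. intros [S [H1 H2]]. apply Hinj in H1. rewrite H1 in H2. apply H; exact H2.
Qed.

Lemma part1 (K : Type) (C D : Category) (F : Functor C D) :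
  HasKappaProducts C K ->
  (forall c' c : Obj C, CardLe (Hom D (fobj F c') (fobj F c)) K) ->
  (forall (c' c : Obj C) (f g : Hom C c' c), fmap F f = fmap F g).
Proof.
  intros HP HC c' c f g.
  apply NNPP; intro Hne.
  assert (EK : Equipotent K K) by (exists (fun x => x), (fun x => x); split; reflexivity).
  destruct (HP K EK (fun _ => c)) as [P [pr Hprod]].
  assert (U : forall S : K -> bool, {u : Hom C c' P |
            forall i, comp (pr i) u = (if S i then f else g)}).
  { intro S. apply constructive_indefinite_description.
    destruct (Hprod c' (fun i => if S i then f else g)) as [u [Hu _]].
    exists u; exact Hu. }
  destruct (HC c' P) as [inj Hinj].
  apply (@cantor_no_inj K (fun S => inj (fmap F (proj1_sig (U S))))).
  intros S T H. apply Hinj in H.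
  apply functional_extensionality; intro i.
  destruct (U S) as [uS HS], (U T) as [uT HT]; simpl in H.
  assert (E : fmap F (comp (pr i) uS) = fmap F (comp (pr i) uT))
    by (rewrite !fmap_comp, H; reflexivity).
  rewrite HS, HT in E.
  destruct (S i), (T i); auto; exfalso; apply Hne; auto.
Qed.

Theorem proposition2p2 (K : Type) (C D : Category) (F : Functor C D) :
  HasKappaProducts C K ->
  HasKappaProducts D K ->
  (forall c' c : Obj C, CardLe (Hom D (fobj F c') (fobj F c)) K) ->
  (forall (c' c : Obj C) (f g : Hom C c' c), fmap F f = fmap F g) /\
  (StronglyConnected C -> inhabited (Obj C) -> IsoToConstantFunctor F).
Proof.
  intros HP _ HC.
  pose proof (@part1 K C D F HP HC) as P1.
  split; [exact P1|].
  intros SC [c0].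
  assert (pick : forall a b : Obj C, Hom C a b).
  { intros a b.
    assert (Ex : exists _ : Hom C a b, True) by (destruct (SC a b) as [h]; exists h; exact I).
    exact (proj1_sig (constructive_indefinite_description _ Ex)). }
  exists (fobj F c0).
  exists (fun c => fmap F (pick c c0)) ; simpl.
  split.
  - intro c. exists (fmap F (pick c0 c)). split.
    + rewrite <- fmap_comp, <- fmap_id. apply P1.
    + rewrite <- fmap_comp, <- fmap_id. apply P1.
  - intros a b f. simpl. rewrite comp_id_l, <- fmap_comp. apply P1.
Qed.
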